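(* Let $n\ge d\ge2$ and let $\mathcal{C}$ be a $d$-uniform clutter on $[n]$ which is both chordal and co-chordal. Then for all $i\ge1$, \[ \lambda_i(\mathcal{C})\le\binom{n-1-i}{d-2}. \]
   Context: $\mathcal{C}_{n,d}$ is the set of all $d$-subsets of $[n]$; a $d$-uniform clutter on $[n]$ is a subset of $\mathcal{C}_{n,d}$. Submaximal circuit: a $(d-1)$-set contained in some circuit. Clique: a set all of whose $d$-subsets are circuits. $\mathrm{N}_{\mathcal{C}}(e)=\{c: e\cup\{c\}\in\mathcal{C}\}$, $\mathrm{N}_{\mathcal{C}}[e]=e\cup\mathrm{N}_{\mathcal{C}}(e)$; $e$ is simplicial if it is a submaximal circuit and $\mathrm{N}_{\mathcal{C}}[e]$ is a clique. $\mathcal{C}\setminus e=\{F\in\mathcal{C}:e\not\subset F\}$; $\mathcal{C}_{e_1\cdots e_i}$ is successive deletion. A simplicial sequence in $\mathcal{C}$ is $e_1,\ldots,e_t$ with $e_1$ simplicial in $\mathcal{C}$ and $e_i$ simplicial in $\mathcal{C}_{e_1\cdots e_{i-1}}$ for $i>1$; a simplicial order is a simplicial sequence $e_1,\ldots,e_r$ with $\mathcal{C}_{e_1\cdots e_r}=\emptyset$, and $\mathcal{C}$ is chordal if one exists. $\mathcal{C}$ is co-chordal if there is a simplicial sequence $e_1,\ldots,e_r$ in $\mathcal{C}_{n,d}$ with $\mathcal{C}=(\mathcal{C}_{n,d})_{e_1\cdots e_r}$. For chordal $\mathcal{C}$, its multiset is $\{N_1,\ldots,N_r\}$ with $N_i=|\mathrm{N}_{\mathcal{C}_{e_1\cdots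 e_{i-1}}}(e_i)|$ for a simplicial order (independent of the order), and $\lambda_i(\mathcal{C})=|\{j:N_j=i\}|$. Binomial coefficients $\binom{a}{b}$ with $a<b$ or $a<0$ are $0$. *)

(* Defs.v *)
From mathcomp Require Import all_boot all_algebra.
Set Implicit Arguments. Unset Strict Implicit. Unset Printing Implicit Defensive.

Section Clutters.
Variable n : nat.
Notation clutter := {set {set 'I_n}}.

Definition complete_clutter (d : nat) : clutter := [set F : {set 'I_n} | #|F| == d].

Definition uniform (d : nat) (C : clutter) : Prop := forall F, F \in C -> #|F| = d.

Definition submaximal (d : nat) (C : clutter) (e : {set 'I_n}) : bool :=
  (#|e| == d.-1) && [exists F in C, e \subset F].

Definition nbhd (C : clutter) (e : {set 'I_n}) : {set 'I_n} :=
  [set c | (c |: e) \in C].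

Definition cnbhd (C : clutter) (e : {set 'I_n}) : {set 'I_n} := e :|: nbhd C e.

Definition clique (d : nat) (C : clutter) (S : {set 'I_n}) : bool :=
  [forall F : {set 'I_n}, ((F \subset S) && (#|F| == d)) ==> (F \in C)].

Definition simplicial (d : nat) (C : clutter) (e : {set 'I_n}) : bool :=
  submaximal d C e && clique d C (cnbhd C e).

Definition del (C : clutter) (e : {set 'I_n}) : clutter :=
  [set F in C | ~~ (e \subset F)].

Definition dels (C : clutter) (s : seq {set 'I_n}) : clutter := foldl del C s.

Fixpoint simp_seq (d : nat) (C : clutter) (s : seq {set 'I_n}) : bool :=
  if s is e :: s' then simplicial d C e && simp_seq d (del C e) s' else true.

Definition simp_order (d : nat) (C : clutter) (s : seq {set 'I_n}) : bool :=
  simp_seq d C s && (dels C s == set0).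

Definition chordal (d : nat) (C : clutter) : Prop := exists s, simp_order d C s.

Definition cochordal (d : nat) (C : clutter) : Prop :=
  exists s, simp_seq d (complete_clutter d) s /\ C = dels (complete_clutter d) s.

Fixpoint Nseq (C : clutter) (s : seq {set 'I_n}) : seq nat :=
  if s is e :: s' then #|nbhd C e| :: Nseq (del C e) s' else [::].

Definition lambda (C : clutter) (s : seq {set 'I_n}) (i : nat) : nat :=
  count (pred1 i) (Nseq C s).
End Clutters.

(* binomial coefficient with the convention binom(a,b) = 0 for a < 0 *)
Definition binomZ (a : int) (b : nat) : nat :=
  match a with Posz m => 'C(m, b) | Negz _ => 0 end.

(* Main.v *)
Require Import Defs.
From mathcomp Require Import all_boot all_algebra zify.
Set Implicit Arguments. Unset Strict Implicit. Unset Printing Implicit Defensive.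
Lemma chu N a b :
  \sum_(0 <= i < N.+1) 'C(i, a) * 'C(N - i, b) = 'C(N.+1, a + b + 1).
Proof.
elim: N a b => [|N IH] a b.
  rewrite big_nat1 sub0n.
  case: a => [|a]; case: b => [|b] //=; by rewrite ?bin0 ?bin0n ?muln0 // addn1 /= bin_small.
rewrite big_nat_recr //= subnn.
case: b => [|b].
  rewrite bin0 muln1.
  under eq_big_nat => i Hi do rewrite !bin0.
  have := IH a 0; under eq_big_nat => i Hi do rewrite !bin0.
  by move=> ->; rewrite !addn0 !addn1 [RHS]binS -binS.
rewrite bin0n muln0 addn0.
rewrite (@eq_big_nat _ _ _ 0 N.+1 _ (fun i => 'C(i, a) * 'C(N - i, b.+1) + 'C(i, a) * 'C(N - i, b))); last first.
  by move=> i Hi; rewrite (subSn (_ : i <= N)) ?binS ?mulnDr //; lia.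
rewrite big_split /= IH IH.
have E : a + b.+1 + 1 = (a + b + 1).+1 by rewrite !addn1 addnS.
rewrite E.
by rewrite [RHS]binS -binS.
Qed.

Lemma sum_count (L : seq nat) B (F : nat -> nat) :
  (forall x, x \in L -> x < B) ->
  \sum_(x <- L) F x = \sum_(0 <= i < B) count (pred1 i) L * F i.
Proof.
elim: L => [|a L IH] HL.
  by rewrite big_nil big1 // => i _.
rewrite big_cons IH; last by move=> x Hx; apply: HL; rewrite inE Hx orbT.
rewrite [RHS](eq_bigr (fun i => (a == i) * F i + count (pred1 i) L * F i)); last first.
  by move=> i _; rewrite /= mulnDl.
rewrite big_split /=; congr (_ + _).
rewrite (eq_bigr (fun i => if i == a then F i else 0)); last first.
  move=> i _; rewrite eq_sym; by case: (i == a); rewrite ?mul1n ?mul0n.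
rewrite -[RHS]big_mkcond big_nat1_eq /=.
by have := HL a (mem_head _ _) => ->.
Qed.
Lemma uniq_coef (mu nu : nat -> nat) B :
  (forall m, 1 <= m -> \sum_(0 <= i < B) mu i * 'C(i, m) = \sum_(0 <= i < B) nu i * 'C(i, m)) ->
  forall i, 1 <= i < B -> mu i = nu i.
Proof.
move=> H.
suff K : forall k i, B - i <= k -> 1 <= i < B -> mu i = nu i.
  by move=> i; apply: K (leqnn _).
elim=> [|k IHk] i Hk /andP[H1 H2]; first lia.
have := H i H1.
have L1 : 0 <= i by [].
have L2 : i <= B by exact: ltnW.
rewrite [LHS](@big_cat_nat _ _ _ i 0 B _ _ L1 L2) [RHS](@big_cat_nat _ _ _ i 0 B _ _ L1 L2) /=.
rewrite (@big_ltn _ _ _ i B _ H2) (@big_ltn _ _ _ i B _ H2).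
have Z : forall f, \sum_(0 <= j < i) f j * 'C(j, i) = 0.
  by move=> f; rewrite big1_seq // => j /andP[_]; rewrite mem_index_iota => /andP[_ Hj]; rewrite bin_small ?muln0.
rewrite !Z.
rewrite (@eq_big_nat _ _ _ i.+1 B (fun j => mu j * 'C(j, i)) (fun j => nu j * 'C(j, i))); last first.
  by move=> j Hj; rewrite (IHk j) //; lia.
by rewrite binn !muln1 => /eqP; rewrite !add0n eqn_add2r => /eqP.
Qed.

Section Cl.
Variables (n d : nat).
Hypothesis d1 : 0 < d.
Notation clutter := {set {set 'I_n}}.

Definition cl (D : clutter) k := #|[set S : {set 'I_n} | (#|S| == k) && clique d D S]|.

Lemma uniform_del (D : clutter) e : uniform d D -> uniform d (del D e).
Proof. by move=> U F; rewrite inE => /andP[/U ->]. Qed.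

Lemma cliqueP (D : clutter) (S : {set 'I_n}) : reflect (forall F : {set 'I_n}, F \subset S -> #|F| = d -> F \in D) (clique d D S).
Proof.
apply: (iffP forallP) => H F.
  by move=> FS Fd; have := H F; rewrite FS Fd eqxx.
by apply/implyP => /andP[FS /eqP Fd]; apply: H.
Qed.

Lemma clique_sub (D : clutter) (S T : {set 'I_n}) : clique d D S -> T \subset S -> clique d D T.
Proof.
move=> /cliqueP H TS; apply/cliqueP => F FT Fd; apply: H Fd.
exact: subset_trans FT TS.
Qed.

Lemma nbhd_notin (D : clutter) (e : {set 'I_n}) c : uniform d D -> #|e| = d.-1 -> c \in nbhd D e -> c \notin e.
Proof.
move=> U He; rewrite inE => /U Hd; apply/negP => ce; move: Hd.
by rewrite (setUidPr _) ?sub1set // He; lia.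
Qed.

Lemma ext_card (e : {set 'I_n}) c : #|e| = d.-1 -> c \notin e -> #|c |: e| = d.
Proof. by move=> He ce; rewrite cardsU1 ce He; lia. Qed.

Lemma cl_del (D : clutter) e k : uniform d D -> simplicial d D e -> d <= k ->
  cl D k = 'C(#|nbhd D e|, k - d.-1) + cl (del D e) k.
Proof.
move=> U /andP[/andP[/eqP He _] Hcl] dk.
set A := [set S : {set 'I_n} | (#|S| == k) && clique d D S].
rewrite /cl -/A -(cardsID [set S : {set 'I_n} | e \subset S] A); congr (_ + _).
  rewrite -cards_draws.
  have inj : {in [set T : {set 'I_n} | T \subset nbhd D e & #|T| == k - d.-1] &, injective (fun T => e :|: T)}.
    move=> T1 T2; rewrite !inE => /andP[T1N _] /andP[T2N _] E.
    have dis : forall T : {set 'I_n}, T \subset nbhd D e -> (e :|: T) :\: e = T.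
      move=> T TN; apply/setP => x; rewrite !inE; case xT: (x \in T); last by rewrite orbF andNb.
      by rewrite orbT andbT; apply: (nbhd_notin U He); apply: (subsetP TN).
    by rewrite -(dis _ T1N) -(dis _ T2N) E.
  rewrite -(card_in_imset inj); apply: eq_card => S; rewrite !inE.
  apply/idP/imsetP.
  - move=> /andP[/andP[/eqP Sk SC] eS].
    exists (S :\: e).
      rewrite inE; apply/andP; split.
        apply/subsetP => x; rewrite !inE => /andP[xe xS].
        apply: (cliqueP _ _ SC); last exact: ext_card.
        by rewrite subUset sub1set xS eS.
      by rewrite cardsDS // Sk He.
    by apply/setP => x; rewrite !inE; case xe: (x \in e) => //=; rewrite (subsetP eS).
  - move=> [T]; rewrite inE => /andP[TN /eqP Tk] ->.
    have I0 : e :&: T = set0.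
      apply/setP => x; rewrite !inE; case xT: (x \in T); last by rewrite andbF.
      by rewrite andbT; apply/negbTE; apply: (nbhd_notin U He); apply: (subsetP TN).
    rewrite cardsU I0 cards0 subn0 He Tk subsetUl andbT.
    apply/andP; split; first by apply/eqP; lia.
    by apply: clique_sub Hcl _; rewrite /cnbhd setUS.
apply: eq_card => S; rewrite !inE.
case Sk: (#|S| == k) => /=; last by rewrite andbF.
move/eqP: Sk => Sk.
apply/andP/idP.
- move=> [neS cS]; apply/cliqueP => F FS Fd; have FD := cliqueP _ _ cS F FS Fd; rewrite inE FD /=.
  by apply: contra neS => eF; apply: subset_trans eF FS.
- move=> cS'; split; last first.
    by apply/cliqueP => F FS Fd; have := cliqueP _ _ cS' F FS Fd; rewrite inE => /andP[].
  apply/negP => eS.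
  have : 0 < #|S :\: e| by rewrite cardsDS // Sk He; lia.
  move/card_gt0P => [c]; rewrite inE => /andP[ce cS].
  have := cliqueP _ _ cS' (c |: e).
  rewrite subUset sub1set cS eS ext_card // => /(_ isT erefl).
  by rewrite inE subsetUr andbF.
Qed.

Lemma cl_empty k : d <= k -> cl set0 k = 0.
Proof.
move=> dk; apply: eq_card0 => S; rewrite !inE.
apply/negbTE/negP => /andP[/eqP Sk cS].
have : 0 < #|[set F : {set 'I_n} | F \subset S & #|F| == d]| by rewrite cards_draws bin_gt0 Sk.
move/card_gt0P => [F]; rewrite inE => /andP[FS /eqP Fd].
by have := cliqueP _ _ cS F FS Fd; rewrite inE.
Qed.

Lemma cl_order k : d <= k -> forall t (D : clutter), uniform d D -> simp_order d D t ->
  cl D k = \sum_(x <- Nseq D t) 'C(x, k - d.-1).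
Proof.
move=> dk; elim=> [|e t IH] D U /andP[Hs /eqP He].
  by rewrite big_nil; move: He => /= ->; apply: cl_empty.
move: Hs => /= /andP[Hse Hst].
rewrite big_cons (cl_del U Hse dk) (IH (del D e)) //; first exact: uniform_del.
by rewrite /simp_order Hst; apply/eqP.
Qed.

Lemma cl_complete k : d <= k -> cl (complete_clutter n d) k = 'C(n, k).
Proof.
move=> dk; rewrite /cl -[n in 'C(n, _)]card_ord -card_draws.
apply: eq_card => S; rewrite !inE.
case Sk: (#|S| == k) => //=.
by apply/cliqueP => F _ Fd; rewrite inE Fd.
Qed.

Lemma simp_seq_cat (D : clutter) a b :
  simp_seq d D (a ++ b) = simp_seq d D a && simp_seq d (dels D a) b.
Proof. by elim: a D => [|e a IH] D //=; rewrite IH andbA. Qed.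

Lemma Nseq_cat (D : clutter) a b : Nseq D (a ++ b) = Nseq D a ++ Nseq (dels D a) b.
Proof. by elim: a D => [|e a IH] D //=; rewrite IH. Qed.

Lemma dels_cat (D : clutter) a b : dels (dels D a) b = dels D (a ++ b).
Proof. by rewrite /dels foldl_cat. Qed.

End Cl.

Theorem corollary4p8 (n d : nat) (C : {set {set 'I_n}}) :
  (2 <= d)%N -> (d <= n)%N ->
  uniform d C -> chordal d C -> cochordal d C ->
  forall s : seq {set 'I_n}, simp_order d C s ->
  forall i : nat, (1 <= i)%N ->
    (lambda C s i <= binomZ (n%:Z - 1 - i%:Z)%R (d - 2))%N.
Proof.
move=> d2 dn UC _ [es [Hes HC]] s /andP[Hs /eqP Hs0] i i1.
have d1 : 0 < d by lia.
set D0 := complete_clutter n d.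
set L := Nseq D0 (es ++ s).
have HL : L = Nseq D0 es ++ Nseq C s by rewrite /L Nseq_cat -HC.
have ord : simp_order d D0 (es ++ s).
  by rewrite /simp_order simp_seq_cat Hes -HC Hs -dels_cat -HC Hs0 eqxx.
have UD0 : uniform d D0 by move=> F; rewrite inE => /eqP.
have Hsum : forall m, 1 <= m -> \sum_(x <- L) 'C(x, m) = 'C(n, m + d.-1).
  move=> m m1; have dk : d <= m + d.-1 by lia.
  rewrite -(@cl_complete n d _ dk) (@cl_order n d d1 _ dk _ _ UD0 ord).
  by have -> : m + d.-1 - d.-1 = m by lia.
have Hlt : forall x, x \in L -> x < n.
  move=> x xL; rewrite ltnNge; apply/negP => nx.
  have x1 : 1 <= x by lia.
  have := Hsum x x1; rewrite (bin_small (_ : n < x + d.-1)); last by lia.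
  by rewrite (big_rem _ xL) /= binn.
have Hcount : forall j, 1 <= j < n -> count (pred1 j) L = 'C(n.-1 - j, d - 2).
  apply: (@uniq_coef (fun j => count (pred1 j) L) (fun j => 'C(n.-1 - j, d - 2)) n) => m m1.
  rewrite -sum_count // Hsum //.
  rewrite [RHS](eq_bigr (fun i => 'C(i, m) * 'C(n.-1 - i, d - 2))); last by move=> *; rewrite mulnC.
  have n0 : 0 < n by lia.
  have := chu n.-1 m (d - 2); rewrite (prednK n0) => ->.
  by have -> : m + (d - 2) + 1 = m + d.-1 by lia.
rewrite /lambda.
have le : count (pred1 i) (Nseq C s) <= count (pred1 i) L by rewrite HL count_cat leq_addl.
apply: leq_trans le _.
case: (ltnP i n) => iN.
  rewrite Hcount ?i1 //.
  case E: (n%:Z - 1 - i%:Z)%R => [m|m] /=; last by lia.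
  by have -> : m = n.-1 - i by lia.
have -> : count (pred1 i) L = 0.
  apply/eqP; rewrite -leqn0 leqNgt -has_count; apply/hasP => [[x xL /eqP xi]].
  by have := Hlt x xL; lia.
by [].
Qed.
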